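(* Let $S\subseteq V$ be fixed and let $R_1,\dots,R_T$ be $T$ independent IBSs drawn from $\Omega^n$. Let $\mu=\mathbb{E}[Z_j(S)]$. Then for every $\lambda>0$: $$\Pr\Big[\sum_{j=1}^T Z_j(S)-T\mu\ge\lambda\Big]\le\exp\!\left(-\frac{\lambda^2}{\frac{2}{3}\rho\lambda+2p(S)\mu T}\right),$$ $$\Pr\Big[\sum_{j=1}^T Z_j(S)-T\mu\le-\lambda\Big]\le\exp\!\left(-\frac{\lambda^2}{2p(S)\mu T}\right).$$
   Context: Setting: $G=(V,E)$ is a directed graph under the Independent Cascade model with edge probabilities $p(u,v)\in(0,1)$. Each node has benefit $b(u)\ge0$, and $\Gamma=\sum_u b(u)>0$. For each node $u$, $\gamma(u)=1-\prod_{v\in N_{in}(u)}(1-p(v,u))$, and $\Phi=\sum_u\gamma(u)b(u)>0$. IBS distribution $\Omega^n$: pick a source $u$ with probability $\gamma(u)b(u)/\Phi$. Then output the set of nodes that can reach $u$ in a random live-edge graph (each edge kept independently with probability $p(e)$), conditioned on at least one in-edge of $u$ being kept. For $S\subseteq V$ and a sample $R_j$ define the following quantities: - $X_j(S)=\min\{1,|S\cap R_j|\}$; - $\mu_{\min}(S)=\sum_{v\in S}(1-\gamma(v))b(v)/\Gamma$; - $\rho=\Phi/\Gamma$; - $\mu_{\max}(S)=\rho+\mu_{\min}(S)$; - $Z_j(S)=\rho X_j(S)+\mu_{\min}(S)$; - $p(S)=\min\{\rho,\ \mu_{\max}(S)+\mu_{\min}(S)-2\sqrt{\mu_{\min}(S)\mu_{\max}(S)}\}$.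 *)

(* Defs.v *)
From Stdlib Require Import Reals Lra List Classical ClassicalEpsilon Relations.
Import ListNotations.
Open Scope R_scope.

(* Nodes are the naturals 0..n-1; a directed edge (v,u) goes from v to u. *)
Definition edge := (nat * nat)%type.

Fixpoint sumR {A : Type} (f : A -> R) (l : list A) : R :=
  match l with [] => 0 | x :: t => f x + sumR f t end.
Fixpoint prodR {A : Type} (f : A -> R) (l : list A) : R :=
  match l with [] => 1 | x :: t => f x * prodR f t end.

Definition ind (P : Prop) : R :=
  if excluded_middle_informative P then 1 else 0.

Definition nodes (n : nat) : list nat := seq 0 n.

Definition gamma (E : list edge) (p : nat -> nat -> R) (u : nat) : R :=
  1 - prodR (fun e => 1 - p (fst e) (snd e))
            (filter (fun e => Nat.eqb (snd e) u) E).

Definition Gamma (n : nat) (b : nat -> R) : R := sumR b (nodes n).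

Definition Phi (n : nat) (E : list edge) (p : nat -> nat -> R) (b : nat -> R) : R :=
  sumR (fun u => gamma E p u * b u) (nodes n).

(* Live-edge graphs: a mask (list bool aligned with E), bit true = edge kept. *)
Fixpoint masks (k : nat) : list (list bool) :=
  match k with
  | O => [[]]
  | S k => map (cons true) (masks k) ++ map (cons false) (masks k)
  end.

Definition all_masks (E : list edge) : list (list bool) := masks (length E).

Definition mask_prob (E : list edge) (p : nat -> nat -> R) (m : list bool) : R :=
  prodR (fun em : edge * bool =>
           if snd em then p (fst (fst em)) (snd (fst em))
           else 1 - p (fst (fst em)) (snd (fst em)))
        (combine E m).

Definition kept (E : list edge) (m : list bool) : list edge :=
  map fst (filter snd (combine E m)).

Definition Reaches (E : list edge) (m : list bool) (v u : nat) : Prop :=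
  clos_refl_trans nat (fun x y => In (x, y) (kept E m)) v u.

Definition in_kept (E : list edge) (m : list bool) (u : nat) : Prop :=
  exists e, In e (kept E m) /\ snd e = u.

(* Outcomes of one IBS draw: (source u, live-edge graph m) *)
Definition outcomes (n : nat) (E : list edge) : list (nat * list bool) :=
  list_prod (nodes n) (all_masks E).

Definition cond_mass (E : list edge) (p : nat -> nat -> R) (u : nat) : R :=
  sumR (fun m => mask_prob E p m * ind (in_kept E m u)) (all_masks E).

(* probability of outcome (u,m) under Omega^n *)
Definition ibs_weight (n : nat) (E : list edge) (p : nat -> nat -> R) (b : nat -> R)
    (o : nat * list bool) : R :=
  (gamma E p (fst o) * b (fst o) / Phi n E p b) *
  (mask_prob E p (snd o) * ind (in_kept E (snd o) (fst o)) / cond_mass E p (fst o)).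

(* X_j(S) = min{1, |S ∩ R_j|}, R_j = nodes that reach the source *)
Definition Xf (E : list edge) (S : list nat) (o : nat * list bool) : R :=
  Rmin 1 (sumR (fun v => ind (Reaches E (snd o) v (fst o))) S).

Definition mu_min (n : nat) (E : list edge) (p : nat -> nat -> R) (b : nat -> R)
    (S : list nat) : R :=
  sumR (fun v => (1 - gamma E p v) * b v) S / Gamma n b.

Definition rho (n : nat) (E : list edge) (p : nat -> nat -> R) (b : nat -> R) : R :=
  Phi n E p b / Gamma n b.

Definition mu_max n E p b S : R := rho n E p b + mu_min n E p b S.

Definition Zf n E p b S (o : nat * list bool) : R :=
  rho n E p b * Xf E S o + mu_min n E p b S.

Definition pS n E p b S : R :=
  Rmin (rho n E p b)
       (mu_max n E p b S + mu_min n E p b S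
        - 2 * sqrt (mu_min n E p b S * mu_max n E p b S)).

Definition mu n E p b S : R :=
  sumR (fun o => ibs_weight n E p b o * Zf n E p b S o) (outcomes n E).

Fixpoint tuples {A : Type} (l : list A) (T : nat) : list (list A) :=
  match T with
  | O => [[]]
  | S T => flat_map (fun x => map (cons x) (tuples l T)) l
  end.

(* Probability, over T independent IBS draws, of event Q on the samples *)
Definition PrT n E p b (T : nat) (Q : list (nat * list bool) -> Prop) : R :=
  sumR (fun t => prodR (ibs_weight n E p b) t * ind (Q t))
       (tuples (outcomes n E) T).

Definition sumZ n E p b S (t : list (nat * list bool)) : R :=
  sumR (Zf n E p b S) t.

(* Main.v *)
Require Import Defs.
From Stdlib Require Import Reals Lra Lia List Classical ClassicalEpsilon Relations.
From Coquelicot Require Import Coquelicot.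
Import ListNotations.
Open Scope R_scope.

Lemma exp_le_mono x y : x <= y -> exp x <= exp y.
Proof. intros [H|H]; [left; apply exp_increasing; auto| subst; lra]. Qed.

Lemma incr_from_deriv (g g' : R -> R) :
  (forall t, is_derive g t (g' t)) -> (forall t, 0 <= t -> 0 <= g' t) ->
  forall t, 0 <= t -> g 0 <= g t.
Proof.
  intros Hd Hp t Ht.
  destruct (MVT_gen g 0 t g') as [c [Hc Heq]].
  - intros; apply Hd.
  - intros x _. apply continuity_pt_filterlim.
    apply (ex_derive_continuous g x). eexists; apply Hd.
  - rewrite Rmin_left in Hc by lra. rewrite Rmax_right in Hc by lra.
    assert (0 <= g' c) by (apply Hp; lra).
    assert (0 <= g' c * (t - 0)) by (apply Rmult_le_pos; lra). lra.
Qed.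

Lemma convex_nonneg (f f' f'' : R -> R) :
  (forall t, is_derive f t (f' t)) -> (forall t, is_derive f' t (f'' t)) ->
  (forall t, 0 <= t -> 0 <= f'' t) -> f 0 = 0 -> f' 0 = 0 ->
  forall t, 0 <= t -> 0 <= f t.
Proof.
  intros H1 H2 H3 H4 H5 t Ht.
  assert (forall t, 0 <= t -> 0 <= f' t).
  { intros u Hu. rewrite <- H5. apply (incr_from_deriv f' f''); auto. }
  rewrite <- H4. apply (incr_from_deriv f f'); auto.
Qed.

Lemma bernstein_aux t : 0 <= t -> (1 - t/3) * (exp t - 1 - t) <= t^2/2.
Proof.
  intro Ht.
  set (f := fun t => t^2/2 - (1 - t/3) * (exp t - 1 - t)).
  set (f' := fun t => t/3 + 2/3 - 2/3 * exp t + t * exp t / 3).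
  set (f'' := fun t => (1 - exp t * (1 - t))/3).
  assert (0 <= f t).
  { apply (convex_nonneg f f' f''); auto.
    - intro u. unfold f, f'. auto_derive; auto. lra.
    - intro u. unfold f', f''. auto_derive; auto. lra.
    - intros u Hu. unfold f''.
      assert (1 - u <= exp (-u)) by (pose proof (exp_ineq1_le (-u)); lra).
      assert (exp u * exp (-u) = 1) by (rewrite <- exp_plus; replace (u + -u) with 0 by lra; apply exp_0).
      assert (0 < exp u) by apply exp_pos.
      assert (exp u * (1-u) <= exp u * exp (-u)) by (apply Rmult_le_compat_l; lra).
      lra.
    - unfold f. rewrite exp_0. lra.
    - unfold f'. rewrite exp_0. lra. }
  unfold f in H. lra.
Qed.

Lemma upper_mgf q t : 0 <= q <= 1 -> 0 <= t ->
  ln (1 - q + q * exp t) - t * q <= q * (1 - q) * (exp t - 1 - t).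
Proof.
  intros Hq Ht.
  assert (HD : forall u, 0 < 1 - q + q * exp u).
  { intro u. pose proof (exp_pos u). destruct (Req_dec q 0). subst; lra. nra. }
  set (f := fun u => q * (1 - q) * (exp u - 1 - u) - (ln (1 - q + q * exp u) - u * q)).
  set (f' := fun u => q * (1 - q) * (exp u - 1) - (q * exp u / (1 - q + q * exp u) - q)).
  set (f'' := fun u => q * (1 - q) * exp u - q * (1 - q) * exp u / (1 - q + q * exp u) ^ 2).
  assert (0 <= f t).
  { apply (convex_nonneg f f' f''); auto.
    - intro u. unfold f, f'. auto_derive. specialize (HD u); lra. field. specialize (HD u); lra.
    - intro u. unfold f', f''. auto_derive. specialize (HD u); lra. field. specialize (HD u); lra.
    - intros u Hu. unfold f''. specialize (HD u).
      assert (1 <= exp u) by (pose proof (exp_ineq1_le u); lra).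
      assert (1 <= 1 - q + q * exp u) by nra.
      assert (0 <= q * (1-q) * exp u) by (pose proof (exp_pos u); apply Rmult_le_pos; nra).
      assert (q * (1 - q) * exp u / (1 - q + q * exp u) ^ 2 <= q * (1 - q) * exp u).
      { unfold Rdiv. rewrite <- (Rmult_1_r (q * (1 - q) * exp u)) at 2.
        apply Rmult_le_compat_l; auto.
        rewrite <- Rinv_1. apply Rinv_le_contravar. lra. nra. }
      lra.
    - unfold f. rewrite exp_0. replace (1 - q + q * 1) with 1 by ring. rewrite ln_1. lra.
    - unfold f'. rewrite exp_0. replace (1 - q + q * 1) with 1 by ring. field. }
  unfold f in H. lra.
Qed.

Lemma lower_mgf q v t : 0 <= q <= 1 -> 0 <= t ->
  (forall a, 0 <= a <= q -> a * (1 - a) <= v) ->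
  ln (1 - q + q * exp (-t)) + t * q <= t ^ 2 * v / 2.
Proof.
  intros Hq Ht Hv.
  assert (HD : forall u, 0 < 1 - q + q * exp (-u)).
  { intro u. pose proof (exp_pos (-u)). destruct (Req_dec q 0). subst; lra. nra. }
  set (f := fun u => u ^ 2 * v / 2 - (ln (1 - q + q * exp (-u)) + u * q)).
  set (f' := fun u => u * v - (- (q * exp (-u)) / (1 - q + q * exp (-u)) + q)).
  set (f'' := fun u => v - q * (1 - q) * exp (-u) / (1 - q + q * exp (-u)) ^ 2).
  assert (0 <= f t).
  { apply (convex_nonneg f f' f''); auto.
    - intro u. unfold f, f'. auto_derive. specialize (HD u); lra. field. specialize (HD u); lra.
    - intro u. unfold f', f''. auto_derive. specialize (HD u); lra. field. specialize (HD u); lra.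
    - intros u Hu. unfold f''. specialize (HD u).
      set (D := 1 - q + q * exp (-u)) in *.
      set (a := q * exp (-u) / D).
      assert (He : exp (-u) <= 1) by (rewrite <- exp_0; apply exp_le_mono; lra).
      assert (0 < exp (-u)) by apply exp_pos.
      assert (Ha1 : 0 <= a) by (unfold a; apply Rmult_le_pos; [nra| left; apply Rinv_0_lt_compat; lra]).
      assert (Ha2 : a <= q).
      { unfold a. apply (Rmult_le_reg_r D); auto. unfold Rdiv. rewrite Rmult_assoc, Rinv_l by lra.
        unfold D. assert (0 <= q * (1 - q)) by nra. assert (0 <= q*(1-q)*(1 - exp (-u))) by (apply Rmult_le_pos; lra). nra. }
      assert (Heq : q * (1 - q) * exp (-u) / D ^ 2 = a * (1 - a)).
      { unfold a. assert (E1 : 1 - q * exp (-u) / D = (1 - q) / D) by (unfold D in *; field; lra).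
        rewrite E1. field. lra. }
      rewrite Heq. specialize (Hv a (conj Ha1 Ha2)). lra.
    - unfold f. rewrite Ropp_0, exp_0. replace (1 - q + q * 1) with 1 by ring. rewrite ln_1. lra.
    - unfold f'. rewrite Ropp_0, exp_0. replace (1 - q + q * 1) with 1 by ring. field. }
  unfold f in H. lra.
Qed.

Lemma var_bound rho m q : 0 < rho -> 0 <= m -> 0 <= q <= 1 ->
  let P := Rmin rho ((rho + m) + m - 2 * sqrt (m * (rho + m))) in
  0 <= P * (rho * q + m) /\
  (forall a, 0 <= a <= q -> rho ^ 2 * (a * (1 - a)) <= P * (rho * q + m)).
Proof.
  intros Hr Hm Hq P.
  set (s0 := sqrt (m * (rho + m))).
  assert (Hs0 : 0 <= s0) by apply sqrt_pos.
  assert (Hss : s0 * s0 = m * (rho + m)) by (apply sqrt_sqrt; nra).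
  assert (Hsm : m <= s0) by nra.
  assert (Hs2 : 2 * s0 <= rho + 2 * m) by nra.
  assert (HP : P = rho + m + m - 2 * s0) by (unfold P; rewrite Rmin_right; fold s0; lra).
  rewrite HP.
  assert (Ha : rho ^ 2 * (q * (1 - q)) <= (rho + m + m - 2 * s0) * (rho * q + m)).
  { assert (0 <= (rho * q + m - s0) ^ 2) by apply pow2_ge_0.
    assert (E0 : (rho + m + m - 2 * s0) * (rho * q + m) - rho ^ 2 * (q * (1 - q)) = (rho * q + m - s0) ^ 2 + (m * (rho + m) - s0 * s0)) by ring.
    lra. }
  assert (Hb : 1/2 <= q -> rho ^ 2 / 4 <= (rho + m + m - 2 * s0) * (rho * q + m)).
  { intro Hq2. assert (E1 : (rho + m + m - 2 * s0) * (rho + m + m + 2 * s0) = rho ^ 2).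
    { replace ((rho + m + m - 2 * s0) * (rho + m + m + 2 * s0)) with ((rho + 2*m)^2 - 4 * (s0 * s0)) by ring. rewrite Hss. ring. }
    assert (rho + m + m + 2 * s0 <= 4 * (rho * q + m)) by nra.
    assert (0 <= rho + m + m - 2 * s0) by lra. nra. }
  split.
  - assert (0 <= rho ^ 2 * (q * (1 - q))) by (apply Rmult_le_pos; nra). lra.
  - intros a Ha'. destruct (Rle_lt_dec q (1/2)).
    + assert (0 <= (q - a) * (1 - a - q)) by (apply Rmult_le_pos; lra).
      assert (a * (1 - a) <= q * (1 - q)) by nra. assert (0 <= rho^2) by nra. nra.
    + assert (0 <= (a - 1/2)^2) by apply pow2_ge_0. assert (a * (1 - a) <= 1/4) by nra. assert (0 <= rho^2) by nra. specialize (Hb ltac:(lra)). nra.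
Qed.

Lemma sumR_app {A} (f : A -> R) l1 l2 : sumR f (l1 ++ l2) = sumR f l1 + sumR f l2.
Proof. induction l1; simpl; [ring| rewrite IHl1; ring]. Qed.

Lemma sumR_map {A B} (f : B -> R) (g : A -> B) l : sumR f (map g l) = sumR (fun x => f (g x)) l.
Proof. induction l; simpl; auto. rewrite IHl; auto. Qed.

Lemma sumR_flat_map {A B} (f : B -> R) (g : A -> list B) l :
  sumR f (flat_map g l) = sumR (fun x => sumR f (g x)) l.
Proof. induction l; simpl; auto. rewrite sumR_app, IHl; auto. Qed.

Lemma sumR_scal {A} (f : A -> R) c l : sumR (fun x => c * f x) l = c * sumR f l.
Proof. induction l; simpl; [ring| rewrite IHl; ring]. Qed.

Lemma sumR_scal_r {A} (f : A -> R) c l : sumR (fun x => f x * c) l = sumR f l * c.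
Proof. induction l; simpl; [ring| rewrite IHl; ring]. Qed.

Lemma sumR_plus {A} (f g : A -> R) l : sumR (fun x => f x + g x) l = sumR f l + sumR g l.
Proof. induction l; simpl; [ring| rewrite IHl; ring]. Qed.

Lemma sumR_ext_in {A} (f g : A -> R) l : (forall x, In x l -> f x = g x) -> sumR f l = sumR g l.
Proof. induction l; simpl; intros H; auto. rewrite (H a) by auto. rewrite IHl; auto. Qed.

Lemma sumR_le_in {A} (f g : A -> R) l : (forall x, In x l -> f x <= g x) -> sumR f l <= sumR g l.
Proof. induction l; simpl; intros H; [lra|].
  assert (sumR f l <= sumR g l) by (apply IHl; auto). specialize (H a (or_introl eq_refl)). lra. Qed.

Lemma sumR_nonneg {A} (f : A -> R) l : (forall x, In x l -> 0 <= f x) -> 0 <= sumR f l.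
Proof. intro H. replace 0 with (sumR (fun _ : A => 0) l).
  apply sumR_le_in; auto. induction l; simpl; auto. rewrite IHl; [ring|]. intros; apply H; simpl; auto. Qed.

Lemma sumR_pos_in {A} (f : A -> R) l y : (forall x, In x l -> 0 <= f x) -> In y l -> 0 < f y -> 0 < sumR f l.
Proof. induction l; simpl; intros H Hy Hf; [contradiction|].
  destruct Hy as [<-|Hy].
  - assert (0 <= sumR f l) by (apply sumR_nonneg; auto). lra.
  - assert (0 < sumR f l) by (apply IHl; auto). assert (0 <= f a) by auto. lra. Qed.

Lemma sumR_minus_const {A} (f : A -> R) c l : sumR (fun x => f x - c) l = sumR f l - INR (length l) * c.
Proof. induction l; simpl length; simpl sumR; [simpl; ring|]. rewrite IHl, S_INR; ring. Qed.

Lemma sumR_list_prod {A B} (f : A * B -> R) l1 l2 :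
  sumR f (list_prod l1 l2) = sumR (fun x => sumR (fun y => f (x, y)) l2) l1.
Proof. induction l1; simpl; auto. rewrite sumR_app, sumR_map, IHl1; auto. Qed.

Lemma prodR_nonneg {A} (f : A -> R) l : (forall x, In x l -> 0 <= f x) -> 0 <= prodR f l.
Proof. induction l; simpl; intros; [lra|]. apply Rmult_le_pos; auto. Qed.

Lemma prodR_pos {A} (f : A -> R) l : (forall x, In x l -> 0 < f x) -> 0 < prodR f l.
Proof. induction l; simpl; intros; [lra|]. apply Rmult_lt_0_compat; auto. Qed.

Lemma prodR_le1 {A} (f : A -> R) l : (forall x, In x l -> 0 <= f x <= 1) -> prodR f l <= 1.
Proof. induction l; simpl; intros; [lra|].
  assert (0 <= prodR f l) by (apply prodR_nonneg; intros; apply H; auto).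
  assert (prodR f l <= 1) by auto. destruct (H a); auto. nra. Qed.

Lemma tuples_in {A} (l : list A) T t : In t (tuples l T) -> length t = T /\ forall x, In x t -> In x l.
Proof.
  revert t; induction T; simpl; intros t Ht.
  - destruct Ht as [<-|[]]; simpl; split; auto; intros _ [].
  - apply in_flat_map in Ht as [x [Hx Ht]]. apply in_map_iff in Ht as [t' [<- Ht']].
    destruct (IHT t' Ht') as [H1 H2]. simpl; split; auto. intros y [<-|Hy]; auto.
Qed.

Lemma exp_le_mono' x y : x <= y -> exp x <= exp y.
Proof. intros [H|H]; [left; apply exp_increasing; auto| subst; lra]. Qed.

Lemma mgf_tuples {A} (l : list A) (w F : A -> R) T :
  sumR (fun t => prodR w t * exp (sumR F t)) (tuples l T) = (sumR (fun x => w x * exp (F x)) l) ^ T.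
Proof.
  induction T; simpl.
  - rewrite exp_0; ring.
  - rewrite sumR_flat_map, <- IHT, <- sumR_scal_r. apply sumR_ext_in. intros x _.
    rewrite sumR_map. rewrite <- sumR_scal. apply sumR_ext_in. intros t _. simpl.
    rewrite exp_plus. ring.
Qed.

Lemma ind_le (P : Prop) e : (P -> 1 <= e) -> 0 <= e -> Defs.ind P <= e.
Proof. unfold Defs.ind; destruct excluded_middle_informative; auto. Qed.

Lemma ind_iff (P Q : Prop) : (P <-> Q) -> Defs.ind P = Defs.ind Q.
Proof. intro H. unfold Defs.ind; do 2 destruct excluded_middle_informative; tauto. Qed.

Lemma chernoff {A} (l : list A) (w Y : A -> R) T s c :
  (forall x, In x l -> 0 <= w x) -> 0 <= s ->
  sumR (fun t => prodR w t * Defs.ind (sumR Y t >= c)) (tuples l T)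
  <= exp (- (s * c)) * (sumR (fun x => w x * exp (s * Y x)) l) ^ T.
Proof.
  intros Hw Hs. rewrite <- mgf_tuples, <- sumR_scal. apply sumR_le_in. intros t Ht.
  destruct (tuples_in l T t Ht) as [_ Hm].
  assert (0 <= prodR w t) by (apply prodR_nonneg; auto).
  rewrite (Rmult_comm (exp _)), Rmult_assoc. apply Rmult_le_compat_l; auto.
  rewrite <- exp_plus. apply ind_le; [|left; apply exp_pos].
  intro Hc. rewrite sumR_scal. rewrite <- exp_0. apply exp_le_mono'. nra.
Qed.

Lemma pow_exp_le M B T : 0 <= M <= exp B -> M ^ T <= exp (INR T * B).
Proof.
  intro H. apply Rle_trans with (exp B ^ T). apply pow_incr; auto.
  induction T. simpl; rewrite Rmult_0_l, exp_0; lra.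
  rewrite S_INR. simpl pow. replace ((INR T + 1) * B) with (B + INR T * B) by ring.
  rewrite exp_plus. apply Rmult_le_compat_l; [left; apply exp_pos| auto].
Qed.

Lemma mgf_up q s rho V : 0 < rho -> 0 <= q <= 1 -> rho ^ 2 * (q * (1 - q)) <= V -> 0 <= s -> s * rho < 3 ->
  0 <= exp (- (s * rho) * q) * (1 - q + q * exp (s * rho)) <= exp (s ^ 2 * V / (2 * (1 - s * rho / 3))).
Proof.
  intros Hr Hq HV Hs Hs3. set (t := s * rho).
  assert (Ht : 0 <= t) by (unfold t; nra).
  assert (HD : 0 < 1 - q + q * exp t) by (pose proof (exp_pos t); destruct (Req_dec q 0); [subst; lra| nra]).
  split. { apply Rmult_le_pos; [left; apply exp_pos| lra]. }
  replace (exp (- t * q) * (1 - q + q * exp t)) with (exp (ln (1 - q + q * exp t) - t * q)).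
  2:{ unfold Rminus. rewrite exp_plus, exp_ln by auto. replace (- (t * q)) with (- t * q) by ring. ring. }
  apply exp_le_mono'. eapply Rle_trans. apply upper_mgf; auto.
  pose proof (bernstein_aux t Ht).
  assert (H3 : 0 < 1 - t / 3) by (unfold t; lra).
  assert (Hqq : 0 <= q * (1 - q)) by nra.
  assert (exp t - 1 - t <= t ^ 2 / 2 / (1 - t / 3)).
  { apply (Rmult_le_reg_r (1 - t/3)); auto. unfold Rdiv at 2. rewrite Rmult_assoc, Rinv_l by lra. lra. }
  apply Rle_trans with (q * (1 - q) * (t ^ 2 / 2 / (1 - t / 3))).
  { apply Rmult_le_compat_l; auto. }
  unfold t. replace (q * (1 - q) * ((s * rho) ^ 2 / 2 / (1 - s * rho / 3))) with
     ((rho ^ 2 * (q * (1 - q))) * s ^ 2 / (2 * (1 - s * rho / 3))) by (field; lra).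
  unfold Rdiv. apply Rmult_le_compat_r. left; apply Rinv_0_lt_compat; fold t; lra.
  assert (0 <= s ^ 2) by nra. nra.
Qed.

Lemma mgf_low q s rho V : 0 < rho -> 0 <= q <= 1 -> (forall a, 0 <= a <= q -> rho ^ 2 * (a * (1 - a)) <= V) -> 0 <= s ->
  0 <= exp (- (- (s * rho)) * q) * (1 - q + q * exp (- (s * rho))) <= exp (s ^ 2 * V / 2).
Proof.
  intros Hr Hq HV Hs. set (t := s * rho).
  assert (Ht : 0 <= t) by (unfold t; nra).
  assert (HD : 0 < 1 - q + q * exp (- t)) by (pose proof (exp_pos (-t)); destruct (Req_dec q 0); [subst; lra| nra]).
  split. { apply Rmult_le_pos; [left; apply exp_pos| lra]. }
  replace (exp (- - t * q) * (1 - q + q * exp (- t))) with (exp (ln (1 - q + q * exp (- t)) + t * q)).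
  2:{ rewrite exp_plus, exp_ln by auto. replace (- - t * q) with (t * q) by ring. ring. }
  apply exp_le_mono'. eapply Rle_trans. apply (lower_mgf q (V / rho ^ 2)); auto.
  { intros a Ha. specialize (HV a Ha). assert (0 < rho ^ 2) by nra. apply (Rmult_le_reg_l (rho ^ 2)); auto. replace (rho ^ 2 * (V / rho ^ 2)) with V by (field; lra). lra. }

  unfold t. right. field. lra.
Qed.

Lemma upper_final rho q P mu lam T Pr : 0 < rho -> 0 <= q <= 1 -> rho ^ 2 * (q * (1 - q)) <= P * mu ->
  0 <= P * mu -> 0 < lam ->
  (forall s, 0 <= s -> Pr <= exp (- (s * lam)) * (exp (- (s * rho) * q) * (1 - q + q * exp (s * rho))) ^ T) ->
  Pr <= exp (- (lam ^ 2 / (2 / 3 * rho * lam + 2 * P * mu * INR T))).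
Proof.
  intros Hr Hq HV HV0 Hl HPr. set (V := P * mu) in *.
  assert (HT : 0 <= INR T) by apply pos_INR.
  assert (Hgen : forall s, 0 <= s -> s * rho < 3 ->
    Pr <= exp (- (s * lam) + INR T * (s ^ 2 * V / (2 * (1 - s * rho / 3))))).
  { intros s Hs Hs3. eapply Rle_trans. apply (HPr s); auto. rewrite exp_plus.
    apply Rmult_le_compat_l. left; apply exp_pos. apply pow_exp_le. apply mgf_up; auto. }
  replace (2 * P * mu * INR T) with (2 * (INR T * V)) by (unfold V; ring).
  assert (HTV : 0 <= INR T * V) by nra.
  destruct HTV as [HTV|HTV].
  - set (s := lam / (INR T * V + rho * lam / 3)).
    assert (Hden : 0 < INR T * V + rho * lam / 3) by nra.
    assert (Hs : 0 < s) by (unfold s; apply Rdiv_lt_0_compat; lra).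
    assert (Hs3 : s * rho < 3).
    { unfold s. apply (Rmult_lt_reg_r (INR T * V + rho * lam / 3)); auto.
      replace (lam / (INR T * V + rho * lam / 3) * rho * (INR T * V + rho * lam / 3)) with (lam * rho) by (field; lra). lra. }
    eapply Rle_trans. apply (Hgen s); lra. apply exp_le_mono'. right.
    unfold s. field. split; [|split]; [nra|nra|]. replace (INR T * V * 3 + rho * lam - lam * rho) with (3 * (INR T * V)) by ring. lra.

  - set (s := 3 / (2 * rho)).
    assert (Hs : 0 < s) by (unfold s; apply Rdiv_lt_0_compat; lra).
    assert (Hs3 : s * rho < 3) by (unfold s; field_simplify; lra).
    eapply Rle_trans. apply (Hgen s); lra. apply exp_le_mono'. right.
    replace (INR T * (s ^ 2 * V / (2 * (1 - s * rho / 3)))) with ((INR T * V) * (s ^ 2 / (2 * (1 - s * rho / 3)))) by (unfold Rdiv; ring).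
    rewrite <- HTV. unfold s. rewrite Rmult_0_r, Rmult_0_l. field. lra.
Qed.

Lemma lower_final rho q P mu lam T Pr : 0 < rho -> 0 <= q <= 1 ->
  (forall a, 0 <= a <= q -> rho ^ 2 * (a * (1 - a)) <= P * mu) ->
  0 <= P * mu -> 0 < lam ->
  (forall s, 0 <= s -> Pr <= exp (- (s * lam)) * (exp (- (- (s * rho)) * q) * (1 - q + q * exp (- (s * rho)))) ^ T) ->
  Pr <= exp (- (lam ^ 2 / (2 * P * mu * INR T))).
Proof.
  intros Hr Hq HV HV0 Hl HPr. set (V := P * mu) in *.
  assert (HT : 0 <= INR T) by apply pos_INR.
  assert (Hgen : forall s, 0 <= s -> Pr <= exp (- (s * lam) + INR T * (s ^ 2 * V / 2))).
  { intros s Hs. eapply Rle_trans. apply (HPr s); auto. rewrite exp_plus.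
    apply Rmult_le_compat_l. left; apply exp_pos. apply pow_exp_le. apply mgf_low; auto. }
  replace (2 * P * mu * INR T) with (2 * (INR T * V)) by (unfold V; ring).
  assert (HTV : 0 <= INR T * V) by nra.
  destruct HTV as [HTV|HTV].
  - eapply Rle_trans. apply (Hgen (lam / (INR T * V))). left; apply Rdiv_lt_0_compat; lra.
    apply exp_le_mono'. right. field. split; intro Hc; rewrite Hc in HTV; lra.
  - eapply Rle_trans. apply (Hgen 0). lra. apply exp_le_mono'. right.
    rewrite <- HTV, Rmult_0_r. unfold Rdiv. rewrite Rinv_0. ring.
Qed.

Lemma gamma_bounds E p u : (forall e, In e E -> 0 < p (fst e) (snd e) < 1) ->
  0 <= gamma E p u /\ 0 < 1 - gamma E p u.
Proof.
  intro Hp. unfold gamma.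
  set (l := filter _ E).
  assert (Hl : forall e, In e l -> 0 < 1 - p (fst e) (snd e) < 1).
  { intros e He. unfold l in He. apply filter_In in He as [He _]. specialize (Hp e He). lra. }
  assert (0 < prodR (fun e => 1 - p (fst e) (snd e)) l) by (apply prodR_pos; intros; apply Hl; auto).
  assert (prodR (fun e => 1 - p (fst e) (snd e)) l <= 1) by (apply prodR_le1; intros x Hx; specialize (Hl x Hx); lra).
  lra.
Qed.

Lemma mask_prob_pos E p m : (forall e, In e E -> 0 < p (fst e) (snd e) < 1) -> 0 < mask_prob E p m.
Proof.
  intro Hp. unfold mask_prob. apply prodR_pos. intros [e bt] H.
  apply in_combine_l in H. specialize (Hp e H). simpl. destruct bt; lra.
Qed.

Lemma masks_true k : In (repeat true k) (masks k).
Proof. induction k; simpl; auto. apply in_or_app; left. apply in_map; auto. Qed.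

Lemma kept_all E : kept E (repeat true (length E)) = E.
Proof. induction E; simpl; auto. unfold kept in *. simpl. f_equal; auto. Qed.

Lemma gamma_or_cond E p u : (forall e, In e E -> 0 < p (fst e) (snd e) < 1) ->
  gamma E p u = 0 \/ 0 < cond_mass E p u.
Proof.
  intro Hp. destruct (filter (fun e => Nat.eqb (snd e) u) E) as [|e l] eqn:Hf.
  - left. unfold gamma. rewrite Hf. simpl. ring.
  - right. assert (He : In e (filter (fun e => Nat.eqb (snd e) u) E)) by (rewrite Hf; simpl; auto).
    apply filter_In in He as [He Hu]. apply Nat.eqb_eq in Hu.
    unfold cond_mass. apply sumR_pos_in with (repeat true (length E)).
    + intros m _. apply Rmult_le_pos. left; apply mask_prob_pos; auto.
      unfold Defs.ind; destruct excluded_middle_informative; lra.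
    + apply masks_true.
    + apply Rmult_lt_0_compat. apply mask_prob_pos; auto.
      unfold Defs.ind; destruct excluded_middle_informative as [_|Hn]; [lra|].
      exfalso; apply Hn. exists e. rewrite kept_all. auto.
Qed.

Lemma ind_01 (P : Prop) : 0 <= Defs.ind P <= 1.
Proof. unfold Defs.ind; destruct excluded_middle_informative; lra. Qed.

Lemma Rinv_nonneg x : 0 <= x -> 0 <= / x.
Proof. intros [H|H]. left; apply Rinv_0_lt_compat; auto. subst; rewrite Rinv_0; lra. Qed.

Lemma cond_mass_nonneg E p u : (forall e, In e E -> 0 < p (fst e) (snd e) < 1) -> 0 <= cond_mass E p u.
Proof.
  intro Hp. unfold cond_mass. apply sumR_nonneg. intros m _.
  apply Rmult_le_pos. left; apply mask_prob_pos; auto. apply ind_01.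
Qed.

Lemma weight_nonneg n E p b :
  (forall e, In e E -> 0 < p (fst e) (snd e) < 1) -> (forall u, (u < n)%nat -> 0 <= b u) ->
  0 < Phi n E p b ->
  forall o, In o (outcomes n E) -> 0 <= ibs_weight n E p b o.
Proof.
  intros Hp Hb HPhi [u m] Ho. unfold outcomes in Ho. apply in_prod_iff in Ho as [Hu _].
  unfold nodes in Hu. apply in_seq in Hu.
  unfold ibs_weight; simpl. destruct (gamma_bounds E p u Hp).
  assert (0 <= b u) by (apply Hb; lia).
  apply Rmult_le_pos; unfold Rdiv; apply Rmult_le_pos.
  - apply Rmult_le_pos; auto.
  - left; apply Rinv_0_lt_compat; auto.
  - apply Rmult_le_pos. left; apply mask_prob_pos; auto. apply ind_01.
  - apply Rinv_nonneg, cond_mass_nonneg; auto.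
Qed.

Lemma weight_sum n E p b :
  (forall e, In e E -> 0 < p (fst e) (snd e) < 1) -> 0 < Phi n E p b ->
  sumR (ibs_weight n E p b) (outcomes n E) = 1.
Proof.
  intros Hp HPhi. unfold outcomes. rewrite sumR_list_prod.
  transitivity (sumR (fun u => gamma E p u * b u / Phi n E p b) (nodes n)).
  - apply sumR_ext_in. intros u _. unfold ibs_weight; simpl.
    rewrite sumR_scal. unfold Rdiv at 2. rewrite sumR_scal_r. fold (cond_mass E p u).
    destruct (gamma_or_cond E p u Hp) as [Hg|Hc].
    + rewrite Hg. unfold Rdiv; ring.
    + rewrite Rinv_r by lra. ring.
  - unfold Rdiv. rewrite sumR_scal_r. fold (Phi n E p b). apply Rinv_r. lra.
Qed.

Lemma sumR_01 {A} (f : A -> R) l : (forall x, f x = 0 \/ f x = 1) -> sumR f l = 0 \/ 1 <= sumR f l.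
Proof.
  intro H. induction l; simpl; auto.
  assert (0 <= sumR f l) by (destruct IHl; lra).
  destruct (H a); destruct IHl; lra.
Qed.

Lemma Xf_01 E S o : Xf E S o = 0 \/ Xf E S o = 1.
Proof.
  unfold Xf. destruct (sumR_01 (fun v => Defs.ind (Reaches E (snd o) v (fst o))) S) as [H|H].
  - intro x. unfold Defs.ind; destruct excluded_middle_informative; auto.
  - rewrite H. left. apply Rmin_right. lra.
  - right. apply Rmin_left. auto.
Qed.

Lemma mu_eq n E p b S :
  (forall e, In e E -> 0 < p (fst e) (snd e) < 1) -> 0 < Phi n E p b ->
  mu n E p b S = rho n E p b * sumR (fun o => ibs_weight n E p b o * Xf E S o) (outcomes n E) + mu_min n E p b S.
Proof.
  intros Hp HPhi. unfold mu, Zf.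
  transitivity (sumR (fun o => rho n E p b * (ibs_weight n E p b o * Xf E S o) + ibs_weight n E p b o * mu_min n E p b S) (outcomes n E)).
  - apply sumR_ext_in; intros; ring.
  - rewrite sumR_plus, sumR_scal, sumR_scal_r, weight_sum; auto. ring.
Qed.

Lemma mgf_eq n E p b S t :
  (forall e, In e E -> 0 < p (fst e) (snd e) < 1) -> 0 < Phi n E p b ->
  let q := sumR (fun o => ibs_weight n E p b o * Xf E S o) (outcomes n E) in
  sumR (fun o => ibs_weight n E p b o * exp (t * (Xf E S o - q))) (outcomes n E)
  = exp (- t * q) * (1 - q + q * exp t).
Proof.
  intros Hp HPhi q.
  transitivity (sumR (fun o => exp (- t * q) * (ibs_weight n E p b o + (exp t - 1) * (ibs_weight n E p b o * Xf E S o))) (outcomes n E)).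
  - apply sumR_ext_in. intros o _. destruct (Xf_01 E S o) as [H|H]; rewrite H.
    + replace (t * (0 - q)) with (- t * q) by ring. ring.
    + replace (t * (1 - q)) with (- t * q + t) by ring. rewrite exp_plus. ring.
  - rewrite sumR_scal, sumR_plus, sumR_scal, weight_sum; auto. fold q. ring.
Qed.

Lemma q_bounds n E p b S :
  (forall e, In e E -> 0 < p (fst e) (snd e) < 1) -> (forall u, (u < n)%nat -> 0 <= b u) -> 0 < Phi n E p b ->
  0 <= sumR (fun o => ibs_weight n E p b o * Xf E S o) (outcomes n E) <= 1.
Proof.
  intros Hp Hb HPhi. split.
  - apply sumR_nonneg. intros o Ho. pose proof (weight_nonneg n E p b Hp Hb HPhi o Ho).
    destruct (Xf_01 E S o) as [H1|H1]; rewrite H1; lra.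
  - rewrite <- (weight_sum n E p b Hp HPhi). apply sumR_le_in. intros o Ho.
    pose proof (weight_nonneg n E p b Hp Hb HPhi o Ho).
    destruct (Xf_01 E S o) as [H1|H1]; rewrite H1; lra.
Qed.

Lemma mu_min_nonneg n E p b S :
  (forall e, In e E -> 0 < p (fst e) (snd e) < 1) -> (forall u, (u < n)%nat -> 0 <= b u) ->
  0 < Gamma n b -> (forall v, In v S -> (v < n)%nat) -> 0 <= mu_min n E p b S.
Proof.
  intros Hp Hb HG HS. unfold mu_min, Rdiv. apply Rmult_le_pos.
  - apply sumR_nonneg. intros v Hv. destruct (gamma_bounds E p v Hp).
    apply Rmult_le_pos. lra. apply Hb; auto.
  - left; apply Rinv_0_lt_compat; auto.
Qed.

Theorem lemma5 (n : nat) (E : list edge) (p : nat -> nat -> R) (b : nat -> R)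
  (S : list nat) (T : nat) (lam : R)
  (HEnd : NoDup E)
  (HErange : forall e, In e E -> (fst e < n)%nat /\ (snd e < n)%nat)
  (Hp : forall e, In e E -> 0 < p (fst e) (snd e) < 1)
  (Hb : forall u, (u < n)%nat -> 0 <= b u)
  (HGamma : 0 < Gamma n b)
  (HPhi : 0 < Phi n E p b)
  (HSnd : NoDup S)
  (HSrange : forall v, In v S -> (v < n)%nat)
  (Hlam : 0 < lam) :
  PrT n E p b T
      (fun t => sumZ n E p b S t - INR T * mu n E p b S >= lam)
  <= exp (- (lam ^ 2 / (2 / 3 * rho n E p b * lam
                        + 2 * pS n E p b S * mu n E p b S * INR T)))
  /\
  PrT n E p b T
      (fun t => sumZ n E p b S t - INR T * mu n E p b S <= - lam)
  <= exp (- (lam ^ 2 / (2 * pS n E p b S * mu n E p b S * INR T))).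
Proof.
  set (w := ibs_weight n E p b).
  set (l := outcomes n E).
  set (q := sumR (fun o => w o * Xf E S o) l).
  set (m := mu_min n E p b S).
  set (r := rho n E p b).
  set (M := mu n E p b S).
  assert (Hr : 0 < r) by (unfold r, rho; apply Rdiv_lt_0_compat; auto).
  assert (Hq : 0 <= q <= 1) by (apply q_bounds; auto).
  assert (Hm : 0 <= m) by (apply mu_min_nonneg; auto).
  assert (HM : M = r * q + m) by (apply mu_eq; auto).
  assert (HpS : pS n E p b S = Rmin r ((r + m) + m - 2 * sqrt (m * (r + m)))) by reflexivity.
  destruct (var_bound r m q Hr Hm Hq) as [HV0 HV]. rewrite <- HpS, <- HM in HV0, HV.
  assert (Hw : forall o, In o l -> 0 <= w o) by (apply weight_nonneg; auto).
  assert (Hz : forall o, Zf n E p b S o - M = r * (Xf E S o - q)).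
  { intro o. unfold Zf. fold r m. rewrite HM. ring. }
  split.
  - apply (upper_final r q); auto; [apply HV; lra|].
    intros s Hs. unfold PrT. fold w l.
    rewrite (sumR_ext_in _ (fun t => prodR w t * Defs.ind (sumR (fun o => Zf n E p b S o - M) t >= lam))).
    2:{ intros t Ht. destruct (tuples_in l T t Ht) as [Hlen _]. rewrite sumR_minus_const, Hlen. reflexivity. }
    eapply Rle_trans. apply (chernoff l w _ T s); auto.
    right. pose proof (mgf_eq n E p b S (s * r) Hp HPhi) as H. cbv zeta in H. fold w l in H. fold q in H.
    rewrite <- H. f_equal. f_equal.
    apply sumR_ext_in. intros o _. rewrite Hz. f_equal. f_equal. ring.
  - apply (lower_final r q); auto.
    intros s Hs. unfold PrT. fold w l.
    rewrite (sumR_ext_in _ (fun t => prodR w t * Defs.ind (sumR (fun o => M - Zf n E p b S o) t >= lam))).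
    2:{ intros t Ht. destruct (tuples_in l T t Ht) as [Hlen _]. f_equal. apply ind_iff.
        rewrite (sumR_ext_in (fun o => M - Zf n E p b S o) (fun o => -1 * (Zf n E p b S o - M))) by (intros; ring).
        rewrite sumR_scal, sumR_minus_const, Hlen. unfold sumZ. lra. }
    eapply Rle_trans. apply (chernoff l w _ T s); auto.
    right. pose proof (mgf_eq n E p b S (- (s * r)) Hp HPhi) as H. cbv zeta in H. fold w l in H. fold q in H.
    rewrite <- H. f_equal. f_equal.
    apply sumR_ext_in. intros o _. replace (M - Zf n E p b S o) with (- (Zf n E p b S o - M)) by ring.
    rewrite Hz. f_equal. f_equal. ring.
Qed.
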